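(* Let $n$ be sufficiently large, $\alpha\in[1,n^{0.2}]$, $B=\gamma=\alpha(\ln n)^{10}$, $\rho=(\ln n)^3$, let $L\ge 2$ be an integer and $j\in\{1,\dots,L-1\}$. Let $\zeta_1=\left(\tfrac12-B^{-(j+1)}\right)\gamma B^{2j}-\sqrt{10\gamma\ln n}\,B^{j}$ and $\zeta_3=\tfrac{\gamma B^{2j}}{2}+\tfrac{B^{j+1}}{100}$. Consider a Bernoulli arm with mean $\tfrac12-X$, where $X\sim\mu$ for some $\mu\in\mathcal{D}_j$. Pull the arm $\gamma B^{2j}$ times, obtaining outcomes $\Theta\in\{0,1\}^{\gamma B^{2j}}$ with $|\Theta|=\sum_i\Theta_i$. Then for every outcome vector $\theta$ with $|\theta|\in[\zeta_1,\zeta_3]$, the posterior distribution $\nu$ of $X$ conditioned on $\Theta=\theta$ belongs to $\mathcal{D}_{j+1}$.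
   Context: For an integer $j\ge1$ and $\eta\ge0$, $\mathcal{D}_j(\eta)$ is the class of probability distributions $\pi$ supported on $\{B^{-1},B^{-2},\dots,B^{-L}\}$ such that, for $X\sim\pi$: (i) if $j\ge2$, $\Pr[X\in\{B^{-1},\dots,B^{-(j-1)}\}]\le n^{-9}$; (ii) there is a normalization constant $\lambda>0$ (depending on $\pi$) such that for every $\ell=j,\dots,L$, $\Pr[X=B^{-\ell}]\in\left[\lambda B^{-2\ell}(1-\rho^{-\ell}\eta),\ \lambda B^{-2\ell}(1+\rho^{-\ell}\eta)\right]$. The class $\mathcal{D}_1:=\mathcal{D}_1(0)$ consists of the single distribution with $\Pr[X=B^{-\ell}]=\lambda_1B^{-2\ell}$ for $\ell=1,\dots,L$ ($\lambda_1$ the normalizer), and for $j\ge2$, $\mathcal{D}_j:=\mathcal{D}_j(\rho^j/2)$. *)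

(* Defs.v *)
From Stdlib Require Export Reals List.
Export ListNotations.
Open Scope R_scope.

(* sum_{l=a}^{b} f l  (empty if b < a) *)
Definition rsum (f : nat -> R) (a b : nat) : R :=
  fold_right (fun l acc => f l + acc) 0 (List.seq a (S b - a)).

(* A distribution on {B^-1,...,B^-L} is represented by the function
   l |-> Pr[X = B^-l] on indices l = 1..L (B > 1, so the points are distinct). *)
Definition is_dist (L : nat) (pi : nat -> R) : Prop :=
  (forall l, (1 <= l <= L)%nat -> 0 <= pi l) /\ rsum pi 1 L = 1.

Definition inDeta (n : nat) (B rho : R) (L j : nat) (eta : R) (pi : nat -> R) : Prop :=
  ((2 <= j)%nat -> rsum pi 1 (j - 1) <= / (INR n ^ 9)) /\
  exists lam : R, 0 < lam /\
    forall l, (j <= l <= L)%nat ->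
      lam * / B ^ (2 * l) * (1 - / rho ^ l * eta) <= pi l /\
      pi l <= lam * / B ^ (2 * l) * (1 + / rho ^ l * eta).

Definition inD (n : nat) (B rho : R) (L j : nat) (pi : nat -> R) : Prop :=
  inDeta n B rho L j (if Nat.eqb j 1 then 0 else rho ^ j / 2) pi.

Definition lnn (n : nat) : R := ln (INR n).
Definition gam (n : nat) (alpha : R) : R := alpha * lnn n ^ 10.
Definition Bpar (n : nat) (alpha : R) : R := gam n alpha.
Definition rhopar (n : nat) : R := lnn n ^ 3.

Definition zeta1 (n : nat) (alpha : R) (j : nat) : R :=
  (1/2 - / Bpar n alpha ^ (S j)) * gam n alpha * Bpar n alpha ^ (2 * j)
  - sqrt (10 * gam n alpha * lnn n) * Bpar n alpha ^ j.
Definition zeta3 (n : nat) (alpha : R) (j : nat) : R :=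
  gam n alpha * Bpar n alpha ^ (2 * j) / 2 + Bpar n alpha ^ (S j) / 100.

Definition ones (theta : list bool) : nat := length (filter (fun b : bool => b) theta).

Definition lik (x : R) (theta : list bool) : R :=
  fold_right (fun (b : bool) acc => (if b then 1/2 - x else 1/2 + x) * acc) 1 theta.

Definition posterior (L : nat) (B : R) (mu : nat -> R) (theta : list bool) (l : nat) : R :=
  mu l * lik (/ B ^ l) theta / rsum (fun k => mu k * lik (/ B ^ k) theta) 1 L.

(* Main.v *)
Require Import Defs.
From Stdlib Require Import Lra Lia Psatz.

Lemma fr_scale (f : nat -> R) c s :
  fold_right (fun l acc => f l * c + acc) 0 s = fold_right (fun l acc => f l + acc) 0 s * c.
Proof. induction s; simpl; [lra| rewrite IHs; ring]. Qed.

Lemma rsum_scale f c a b : rsum (fun l => f l * c) a b = rsum f a b * c.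
Proof. unfold rsum; apply fr_scale. Qed.

Lemma fr_le (f g : nat -> R) s :
  (forall l, In l s -> f l <= g l) ->
  fold_right (fun l acc => f l + acc) 0 s <= fold_right (fun l acc => g l + acc) 0 s.
Proof.
  induction s; simpl; intros H; [lra|].
  assert (f a <= g a) by auto. assert (fold_right (fun l acc => f l + acc) 0 s <= fold_right (fun l acc => g l + acc) 0 s) by auto. lra.
Qed.

Lemma rsum_le f g a b : (forall l, (a <= l <= b)%nat -> f l <= g l) -> rsum f a b <= rsum g a b.
Proof.
  intros H; unfold rsum; apply fr_le; intros l Hl; apply in_seq in Hl; apply H; lia.
Qed.

Lemma fr_ext (f g : nat -> R) s :
  (forall l, In l s -> f l = g l) ->
  fold_right (fun l acc => f l + acc) 0 s = fold_right (fun l acc => g l + acc) 0 s.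
Proof.
  induction s; simpl; intros H; [lra|].
  rewrite H by auto. rewrite IHs; auto.
Qed.

Lemma rsum_ext f g a b : (forall l, (a <= l <= b)%nat -> f l = g l) -> rsum f a b = rsum g a b.
Proof.
  intros H; unfold rsum; apply fr_ext; intros l Hl; apply in_seq in Hl; apply H; lia.
Qed.

Lemma rsum_nonneg f a b : (forall l, (a <= l <= b)%nat -> 0 <= f l) -> 0 <= rsum f a b.
Proof.
  intros H. assert (rsum (fun _ => 0) a b = 0).
  { unfold rsum. induction (List.seq a (S b - a)); simpl; lra. }
  rewrite <- H0. apply rsum_le; auto.
Qed.

Lemma fr_app (f : nat -> R) s t :
  fold_right (fun l acc => f l + acc) 0 (s ++ t) =
  fold_right (fun l acc => f l + acc) 0 s + fold_right (fun l acc => f l + acc) 0 t.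
Proof. induction s; simpl; [lra| rewrite IHs; ring]. Qed.

Lemma rsum_split f j L : (j <= L)%nat -> rsum f 1 L = rsum f 1 j + rsum f (S j) L.
Proof.
  intros H; unfold rsum.
  replace (S L - 1)%nat with (j + (L - j))%nat by lia.
  rewrite seq_app, fr_app. replace (S j - 1)%nat with j by lia.
  replace (S L - S j)%nat with (L - j)%nat by lia. replace (1 + j)%nat with (S j) by lia. auto.
Qed.

Lemma rsum_last f j : (1 <= j)%nat -> rsum f 1 j = rsum f 1 (j - 1) + f j.
Proof.
  intros H. unfold rsum. replace (S j - 1)%nat with ((S (j-1) - 1) + 1)%nat by lia.
  rewrite seq_app, fr_app. simpl. replace (j - 1 - 0)%nat with (j-1)%nat by lia.
  replace (S (j - 1)) with j by lia. ring.
Qed.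

Lemma rsum_first f a b : (a <= b)%nat -> rsum f a b = f a + rsum f (S a) b.
Proof.
  intros H. unfold rsum. replace (S b - a)%nat with (S (S b - S a)) by lia. simpl. auto.
Qed.

Lemma rsum_empty f : rsum f 1 0 = 0.
Proof. reflexivity. Qed.

Lemma pow_exp_le y N : 0 <= 1 + y -> (1 + y) ^ N <= exp (INR N * y).
Proof.
  intros Hy. induction N.
  - simpl. rewrite Rmult_0_l, exp_0. lra.
  - rewrite S_INR. replace ((INR N + 1) * y) with (y + INR N * y) by ring.
    rewrite exp_plus. simpl. apply Rmult_le_compat; auto.
    apply pow_le; auto. apply exp_ineq1_le.
Qed.

Lemma bern v N : 0 <= v <= 1 -> 1 - INR N * v <= (1 - v) ^ N.
Proof.
  intros Hv. induction N.
  - simpl. lra.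
  - rewrite S_INR. simpl.
    assert (0 <= INR N) by apply pos_INR.
    assert ((1 - v) * (1 - INR N * v) <= (1 - v) * (1 - v) ^ N) by (apply Rmult_le_compat_l; lra).
    nra.
Qed.

Lemma exp_small t : 0 <= t <= 1/2 -> exp t <= 1 + 2 * t.
Proof.
  intros Ht. assert (H1 := exp_ineq1_le (- t)). rewrite exp_Ropp in H1.
  assert (H2 := exp_pos t).
  assert (exp t * (1 - t) <= 1).
  { apply Rmult_le_reg_r with (/ exp t). apply Rinv_0_lt_compat; lra.
    replace (exp t * (1 - t) * / exp t) with (1 - t) by (field; lra). lra. }
  nra.
Qed.

Lemma exp_nat N x : exp (INR N * x) = exp x ^ N.
Proof.
  induction N.
  - simpl. rewrite Rmult_0_l. apply exp_0.
  - rewrite S_INR. replace ((INR N + 1) * x) with (x + INR N * x) by ring.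
    rewrite exp_plus, IHN. simpl. ring.
Qed.

Lemma exp_cube y : 0 <= y -> (y / 3) ^ 3 <= exp y.
Proof.
  intros Hy. replace y with (INR 3 * (y/3)) at 2 by (simpl; field).
  rewrite exp_nat. apply pow_incr. split; [lra|].
  assert (H := exp_ineq1_le (y/3)). lra.
Qed.

Lemma pow_le_one x N : 0 <= x <= 1 -> x ^ N <= 1.
Proof.
  intros H. induction N; simpl; [lra|].
  assert (0 <= x ^ N) by (apply pow_le; lra). nra.
Qed.

Definition fk (k m : nat) (u : R) : R := (1 - u) ^ k * (1 + u) ^ (m - k).

Lemma ones_le t : (ones t <= length t)%nat.
Proof. unfold ones. apply filter_length_le. Qed.

Lemma lik_closed x t : lik x t = (1/2 - x) ^ (ones t) * (1/2 + x) ^ (length t - ones t).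
Proof.
  induction t as [|b t IH].
  - simpl. unfold ones; simpl. ring.
  - assert (Ho := ones_le t).
    destruct b.
    + change (lik x (true :: t)) with ((1/2 - x) * lik x t). rewrite IH.
      change (ones (true :: t)) with (S (ones t)). change (length (true :: t)) with (S (length t)).
      rewrite Nat.sub_succ. simpl. ring.
    + change (lik x (false :: t)) with ((1/2 + x) * lik x t). rewrite IH.
      change (ones (false :: t)) with (ones t). change (length (false :: t)) with (S (length t)).
      rewrite (Nat.sub_succ_l _ _ Ho). simpl. ring.
Qed.

Lemma lik_fk x t : lik x t = (/2) ^ (length t) * fk (ones t) (length t) (2 * x).
Proof.
  rewrite lik_closed. unfold fk. assert (Ho := ones_le t).
  replace ((/2) ^ length t) with ((/2) ^ (ones t) * (/2) ^ (length t - ones t)).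
  2:{ rewrite <- pow_add. f_equal. lia. }
  replace (1/2 - x) with (/2 * (1 - 2 * x)) by field.
  replace (1/2 + x) with (/2 * (1 + 2 * x)) by field.
  rewrite !Rpow_mult_distr. ring.
Qed.

Lemma fk_nonneg k m u : 0 <= u <= 1 -> 0 <= fk k m u.
Proof. intros; unfold fk; apply Rmult_le_pos; apply pow_le; lra. Qed.

Lemma fk_dec1 k m u : (2 * k <= m)%nat ->
  fk k m u = (1 - u * u) ^ k * (1 + u) ^ (m - 2 * k).
Proof.
  intros H. unfold fk. replace (m - k)%nat with (k + (m - 2*k))%nat by lia.
  rewrite pow_add. replace (1 - u*u) with ((1-u)*(1+u)) by ring. rewrite Rpow_mult_distr. ring.
Qed.

Lemma fk_dec2 k m u : (m <= 2 * k)%nat -> (k <= m)%nat ->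
  fk k m u = (1 - u * u) ^ (m - k) * (1 - u) ^ (2 * k - m).
Proof.
  intros H H'. unfold fk. replace k with ((m - k) + (2 * k - m))%nat at 1 by lia.
  rewrite pow_add. replace (1 - u*u) with ((1-u)*(1+u)) by ring. rewrite Rpow_mult_distr. ring.
Qed.

Lemma fk_up k m u K D : 0 <= u <= 1 -> (k <= m)%nat ->
  K <= INR k -> K <= INR m - INR k -> 0 <= K ->
  INR m - 2 * INR k <= D -> 0 <= D ->
  fk k m u <= exp (- K * (u * u) + D * u).
Proof.
  intros Hu Hkm HK1 HK2 HK0 HD1 HD0.
  assert (Huu : 0 <= u * u <= 1) by nra.
  destruct (Compare_dec.le_lt_dec (2 * k) m) as [H|H].
  - rewrite fk_dec1 by auto.
    assert (E1 : (1 - u * u) ^ k <= exp (INR k * (- (u * u)))).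
    { replace (1 - u*u) with (1 + - (u*u)) by ring. apply pow_exp_le. lra. }
    assert (E2 : (1 + u) ^ (m - 2 * k) <= exp (INR (m - 2 * k) * u)).
    { apply pow_exp_le. lra. }
    rewrite minus_INR in E2 by lia. rewrite mult_INR in E2. simpl INR in E2.
    apply Rle_trans with (exp (INR k * - (u * u)) * exp ((INR m - (1+1) * INR k) * u)).
    { apply Rmult_le_compat; auto; apply pow_le; lra. }
    rewrite <- exp_plus. destruct (Req_dec (INR k * - (u * u) + (INR m - (1 + 1) * INR k) * u) (- K * (u * u) + D * u)) as [e|ne].
    + rewrite e; lra.
    + left. apply exp_increasing. nra.
  - rewrite fk_dec2 by lia.
    assert (E1 : (1 - u * u) ^ (m - k) <= exp (INR (m - k) * (- (u * u)))).
    { replace (1 - u*u) with (1 + - (u*u)) by ring. apply pow_exp_le. lra. }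
    assert (E2 : (1 - u) ^ (2 * k - m) <= 1).
    { apply pow_le_one; lra. }
    rewrite minus_INR in E1 by lia.
    apply Rle_trans with (exp ((INR m - INR k) * - (u * u)) * 1).
    { apply Rmult_le_compat; auto; apply pow_le; lra. }
    rewrite Rmult_1_r.
    destruct (Req_dec ((INR m - INR k) * - (u * u)) (- K * (u * u) + D * u)) as [e|ne].
    + rewrite e; lra.
    + left. apply exp_increasing. nra.
Qed.

Lemma fk_low k m u E : 0 <= u <= 1 -> (k <= m)%nat ->
  2 * INR k - INR m <= E -> 0 <= E ->
  1 - INR m * (u * u) - E * u <= fk k m u.
Proof.
  intros Hu Hkm HE1 HE0.
  assert (Huu : 0 <= u * u <= 1) by nra.
  assert (Hm : 0 <= INR k) by apply pos_INR.
  destruct (Compare_dec.le_lt_dec (2 * k) m) as [H|H].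
  - rewrite fk_dec1 by auto.
    assert (E1 := bern (u*u) k Huu).
    assert (E2 : 1 <= (1 + u) ^ (m - 2 * k)) by (apply pow_R1_Rle; lra).
    assert (INR k <= INR m) by (apply le_INR; lia).
    assert (0 <= (1 - u * u) ^ k) by (apply pow_le; lra).
    nra.
  - rewrite fk_dec2 by lia.
    assert (E1 := bern (u*u) (m - k) Huu).
    assert (E2 := bern u (2 * k - m) Hu).
    rewrite minus_INR in E1 by lia. rewrite minus_INR, mult_INR in E2 by lia. simpl INR in E2.
    assert (A1 : (1 - u * u) ^ (m - k) <= 1) by (apply pow_le_one; lra).
    assert (A0 : 0 <= (1 - u * u) ^ (m - k)) by (apply pow_le; lra).
    assert (C1 : (1 - u) ^ (2 * k - m) <= 1) by (apply pow_le_one; lra).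
    assert (C0 : 0 <= (1 - u) ^ (2 * k - m)) by (apply pow_le; lra).
    set (A := (1 - u * u) ^ (m - k)) in *. set (C := (1 - u) ^ (2 * k - m)) in *.
    assert (A * C >= (1 - (INR m - INR k) * (u * u)) * C) by nra.
    assert (0 <= (INR m - INR k) * (u*u)) by (apply Rmult_le_pos; [ |lra]; assert (INR k <= INR m) by (apply le_INR; lia); lra).
    assert ((1 - (INR m - INR k) * (u * u)) * C >= C - (INR m - INR k) * (u * u)) by nra.
    assert ((INR m - INR k) * (u * u) <= INR m * (u*u)) by nra.
    assert (((1+1) * INR k - INR m) * u <= E * u) by nra.
    nra.
Qed.

Lemma exp_le' x y : x <= y -> exp x <= exp y.
Proof. intros [H|H]; [left; apply exp_increasing; auto | subst; lra]. Qed.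

Lemma ln_le' x y : 0 < x -> x <= y -> ln x <= ln y.
Proof. intros H [H1|H1]; [left; apply ln_increasing; auto | subst; lra]. Qed.

Lemma lnn_ge6 n : (729 <= n)%nat -> 6 <= lnn n.
Proof.
  intros H. unfold lnn.
  assert (E : exp 6 <= INR n).
  { replace 6 with (INR 6 * 1) by (simpl; ring). rewrite exp_nat.
    apply Rle_trans with (3 ^ 6).
    - apply pow_incr. split; [left; apply exp_pos| apply exp_le_3].
    - apply le_INR in H. simpl in H |- *. lra. }
  rewrite <- (ln_exp 6). apply ln_le'; auto. apply exp_pos.
Qed.

Lemma pow2 (x : R) l : x ^ (2 * l) = x ^ l * x ^ l.
Proof. replace (2 * l)%nat with (l + l)%nat by lia. apply pow_add. Qed.

Lemma post_eq L B mu theta l :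
  rsum (fun i => mu i * fk (ones theta) (length theta) (2 * / B ^ i)) 1 L <> 0 ->
  posterior L B mu theta l =
  mu l * fk (ones theta) (length theta) (2 * / B ^ l) /
  rsum (fun i => mu i * fk (ones theta) (length theta) (2 * / B ^ i)) 1 L.
Proof.
  intros HW. unfold posterior.
  rewrite (rsum_ext _ (fun i => mu i * fk (ones theta) (length theta) (2 * / B ^ i) * (/2) ^ length theta)).
  2:{ intros i _. rewrite lik_fk. ring. }
  rewrite rsum_scale, lik_fk.
  assert (0 < (/2) ^ length theta) by (apply pow_lt; lra).
  field. split; lra.
Qed.

Lemma combine_bounds c y a e f t rho :
  0 < c -> c * (1 - a) <= y -> y <= c * (1 + a) -> 1 - e <= f -> f <= 1 + e ->
  0 <= a -> a <= t / (2 * rho) -> 0 <= e -> e <= t / 20 -> 0 <= t <= 1 -> 2 <= rho ->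
  c * (1 - t / 2) <= y * f <= c * (1 + t / 2).
Proof.
  intros. assert (a <= t / 4).
  { apply Rle_trans with (t / (2 * rho)); auto. unfold Rdiv. apply Rmult_le_compat_l; [lra|].
    apply Rinv_le_contravar; lra. }
  assert (0 <= y) by nra. split.
  - assert (c * (1 - a) * (1 - e) <= y * f) by (apply Rmult_le_compat; nra).
    nra.
  - assert (y * f <= c * (1 + a) * (1 + e)) by (apply Rmult_le_compat; nra).
    nra.
Qed.

Lemma F_near (k m : nat) B P R s :
  (k <= m)%nat -> 800 <= B -> 400 * (1 + s) <= B -> 0 <= s -> 1 <= P -> 1 <= R ->
  INR m = B * P * P -> INR m / 2 - P * (1 + s) <= INR k -> INR k <= INR m / 2 + B * P / 100 ->
  1 - / R / 20 <= fk k m (2 * / (B * P * R)) <= 1 + / R / 20.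
Proof.
  intros Hkm HB Hs Hs0 HP HR Hm Hk1 Hk2.
  set (iB := / B). set (V := / R).
  assert (HiB : 0 < iB) by (apply Rinv_0_lt_compat; lra).
  assert (HV : 0 < V) by (apply Rinv_0_lt_compat; lra).
  assert (HV1 : V <= 1) by (unfold V; rewrite <- Rinv_1; apply Rinv_le_contravar; lra).
  assert (HBi : B * iB = 1) by (unfold iB; field; lra).
  assert (HRi : R * V = 1) by (unfold V; field; lra).
  assert (HiB2 : iB <= 1/800) by (unfold iB; apply Rle_trans with (/800); [apply Rinv_le_contravar; lra| lra]).
  assert (Hs' : (1 + s) * iB <= 1/400).
  { apply Rmult_le_reg_r with B; [lra|]. replace ((1+s)*iB*B) with (1+s) by (unfold iB; field; lra). lra. }
  set (u := 2 * / (B * P * R)).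
  assert (Hu : u = 2 * iB * V * / P) by (unfold u, iB, V; field; repeat split; lra).
  assert (HiP : 0 < / P <= 1) by (split; [apply Rinv_0_lt_compat; lra| rewrite <- Rinv_1; apply Rinv_le_contravar; lra]).
  assert (HPi : P * / P = 1) by (field; lra).
  assert (Hu0 : 0 <= u <= 1).
  { rewrite Hu. split. { apply Rmult_le_pos; [|lra]. apply Rmult_le_pos; nra. }
    assert (iB * V * / P <= 1/800) by (assert (V * / P <= 1) by nra; nra). nra. }
  split.
  - assert (L := fk_low k m u (B * P / 50) Hu0 Hkm ltac:(lra) ltac:(nra)).
    assert (E1 : INR m * (u * u) = 4 * iB * V * V).
    { rewrite Hm, Hu. unfold iB, V. field. repeat split; lra. }
    assert (E2 : B * P / 50 * u = V / 25).
    { rewrite Hu. unfold iB, V. field. repeat split; lra. }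
    rewrite E1, E2 in L.
    assert (4 * iB * V * V <= V / 200).
    { assert (iB * V <= 1/800) by nra. nra. }
    unfold Rdiv in *. lra.
  - assert (U := fk_up k m u 0 (2 * P * (1 + s)) Hu0 Hkm ltac:(apply pos_INR)
                 ltac:(assert (INR k <= INR m) by (apply le_INR; auto); lra) ltac:(lra) ltac:(lra) ltac:(nra)).
    assert (E1 : - 0 * (u * u) + 2 * P * (1 + s) * u = 4 * ((1 + s) * iB) * V).
    { rewrite Hu. unfold iB, V. field. repeat split; lra. }
    rewrite E1 in U.
    assert (4 * ((1 + s) * iB) * V <= V / 100) by nra.
    assert (exp (4 * ((1 + s) * iB) * V) <= 1 + 2 * (4 * ((1 + s) * iB) * V)).
    { apply exp_small. split; [|nra]. assert (0 <= (1+s) * iB) by nra. nra. }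
    unfold Rdiv in *. lra.
Qed.

Lemma F_small (k m : nat) B P Q s :
  (k <= m)%nat -> 800 <= B -> 400 * (1 + s) <= B -> 0 <= s -> 1 <= P ->
  INR m = B * P * P -> INR m / 2 - P * (1 + s) <= INR k -> INR k <= INR m / 2 + B * P / 100 ->
  B <= Q -> Q <= P ->
  fk k m (2 * / Q) <= exp (- (B / 2)).
Proof.
  intros Hkm HB Hs Hs0 HP Hm Hk1 Hk2 HQ1 HQ2.
  set (iQ := / Q).
  assert (HiQ : 0 < iQ) by (apply Rinv_0_lt_compat; lra).
  assert (HQi : Q * iQ = 1) by (unfold iQ; field; lra).
  assert (HPQ : 1 <= P * iQ) by nra.
  assert (HiQ1 : iQ <= 1/800) by (unfold iQ; apply Rle_trans with (/800); [apply Rinv_le_contravar; lra| lra]).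
  assert (Hu0 : 0 <= 2 * iQ <= 1) by lra.
  assert (HkR : INR k <= INR m) by (apply le_INR; auto).
  assert (HPs : P * (1 + s) <= B * P * P / 4) by nra.
  assert (HBP : B * P / 100 <= B * P * P / 4) by nra.
  assert (K1 : INR m / 4 <= INR k) by lra.
  assert (K2 : INR m / 4 <= INR m - INR k) by lra.
  assert (K3 : 0 <= INR m / 4) by nra.
  assert (K4 : INR m - 2 * INR k <= 2 * P * (1 + s)) by lra.
  assert (K5 : 0 <= 2 * P * (1 + s)) by nra.
  assert (U := fk_up k m (2 * iQ) (INR m / 4) (2 * P * (1 + s)) Hu0 Hkm K1 K2 K3 K4 K5).
  eapply Rle_trans; [exact U|]. apply exp_le'.
  rewrite Hm.
  assert (A : 4 * P * (1 + s) * iQ <= B * (P * iQ) / 100).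
  { assert (4 * (1 + s) <= B / 100) by lra.
    assert (0 <= P * iQ) by nra. nra. }
  assert (E : - (B * P * P / 4) * (2 * iQ * (2 * iQ)) + 2 * P * (1 + s) * (2 * iQ)
            = - (B * (P * iQ) * (P * iQ)) + 4 * P * (1 + s) * iQ) by (field; lra).
  rewrite E.
  set (w := P * iQ) in *.
  assert (B * w * (w - 1) >= 0) by (apply Rle_ge, Rmult_le_pos; nra).
  assert (B * (w - 1) >= 0) by (apply Rle_ge, Rmult_le_pos; nra).
  nra.
Qed.

Lemma Rdiv_le_0_compat' a b : 0 <= a -> 0 < b -> 0 <= a / b.
Proof. intros. unfold Rdiv. apply Rmult_le_pos; auto. left; apply Rinv_0_lt_compat; auto. Qed.

Theorem mainTheorem2 :
  exists N : nat, forall n : nat, (N <= n)%nat ->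
  forall alpha : R, 1 <= alpha <= Rpower (INR n) (1/5) ->
  forall L j : nat, (2 <= L)%nat -> (1 <= j <= L - 1)%nat ->
  forall mu : nat -> R,
    is_dist L mu -> inD n (Bpar n alpha) (rhopar n) L j mu ->
  forall m : nat, INR m = gam n alpha * Bpar n alpha ^ (2 * j) ->
  forall theta : list bool, length theta = m ->
    zeta1 n alpha j <= INR (ones theta) <= zeta3 n alpha j ->
    is_dist L (posterior L (Bpar n alpha) mu theta) /\
    inD n (Bpar n alpha) (rhopar n) L (S j) (posterior L (Bpar n alpha) mu theta).
Proof.
  exists 729%nat. intros n Hn alpha Ha L j HL Hj mu Hmu HD m Hm theta Hlen Hz.
  assert (HLn := lnn_ge6 n Hn).
  set (Ln := lnn n) in *.
  assert (HB : Bpar n alpha = alpha * Ln ^ 10) by reflexivity.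
  assert (Hrho : rhopar n = Ln ^ 3) by reflexivity.
  set (B := Bpar n alpha) in *. set (rho := rhopar n) in *.
  assert (HL9 : 6 ^ 9 <= Ln ^ 9) by (apply pow_incr; lra).
  assert (HL7 : 1 <= Ln ^ 7) by (apply pow_R1_Rle; lra).
  assert (HBL : Ln ^ 10 <= B) by (rewrite HB; assert (0 <= Ln ^ 10) by (apply pow_le; lra); nra).
  assert (HB1 : 10077696 * Ln <= B).
  { replace (Ln ^ 10) with (Ln ^ 9 * Ln) in HBL by ring. simpl in HL9. nra. }
  assert (Hrho1 : 216 <= rho) by (rewrite Hrho; replace 216 with (6^3) by ring; apply pow_incr; lra).
  assert (HrhoB : rho <= B) by (rewrite Hrho; replace (Ln ^ 10) with (Ln ^ 3 * Ln ^ 7) in HBL by ring;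
                                assert (0 <= Ln ^ 3) by (apply pow_le; lra); nra).
  set (s := sqrt (10 * B * Ln)).
  assert (Hs0 : 0 <= s) by apply sqrt_pos.
  assert (Hs1 : s <= B / 800).
  { unfold s. rewrite <- (sqrt_square (B / 800)) by lra. apply sqrt_le_1_alt. nra. }
  assert (Hs : 400 * (1 + s) <= B) by lra.
  assert (HB800 : 800 <= B) by lra.
  set (P := B ^ j).
  assert (HP : 1 <= P) by (apply pow_R1_Rle; lra).
  assert (Hm' : INR m = B * P * P).
  { rewrite Hm. change (gam n alpha) with B. rewrite pow2. fold P. ring. }
  set (k := ones theta) in *.
  assert (Hkm : (k <= m)%nat) by (rewrite <- Hlen; apply ones_le).
  assert (HBSj : B ^ S j = B * P) by reflexivity.
  destruct Hz as [Hz1 Hz3].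
  assert (Hk1 : INR m / 2 - P * (1 + s) <= INR k).
  { unfold zeta1 in Hz1. change (gam n alpha) with B in Hz1. fold B in Hz1. change (lnn n) with Ln in Hz1. fold s in Hz1.
    rewrite HBSj, pow2 in Hz1. fold P in Hz1. rewrite Hm'.
    replace ((1 / 2 - / (B * P)) * B * (P * P) - s * P) with (B * P * P / 2 - P * (1 + s)) in Hz1
      by (field; repeat split; nra). lra. }
  assert (Hk2 : INR k <= INR m / 2 + B * P / 100).
  { unfold zeta3 in Hz3. change (gam n alpha) with B in Hz3. fold B in Hz3.
    rewrite HBSj, pow2 in Hz3. fold P in Hz3. rewrite Hm'. lra. }
  set (F := fun l => fk k m (2 * / B ^ l)).
  assert (CF0 : forall l, (1 <= l)%nat -> 0 <= F l).
  { intros l Hl. unfold F. apply fk_nonneg.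
    assert (B <= B ^ l) by (replace B with (B ^ 1) at 1 by ring; apply Rle_pow; lra || lia).
    assert (0 < / B ^ l) by (apply Rinv_0_lt_compat; lra).
    assert (/ B ^ l <= / 800) by (apply Rinv_le_contravar; lra). lra. }
  assert (CF1 : forall l, (S j <= l)%nat ->
             1 - / B ^ (l - S j) / 20 <= F l <= 1 + / B ^ (l - S j) / 20).
  { intros l Hl. unfold F.
    replace (B ^ l) with (B * P * B ^ (l - S j)).
    2:{ rewrite <- HBSj, <- pow_add. f_equal. lia. }
    apply F_near with s; auto. apply pow_R1_Rle; lra. }
  assert (CF2 : forall l, (1 <= l <= j)%nat -> F l <= exp (- (B / 2))).
  { intros l Hl. unfold F. apply F_small with P s; auto.
    - replace B with (B ^ 1) at 1 by ring; apply Rle_pow; lra || lia.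
    - apply Rle_pow; lra || lia. }
  destruct Hmu as [Hmu0 Hmu1].
  unfold inD, inDeta in HD. destruct HD as [HD1 [lam [Hlam HD2]]].
  set (eta := if Nat.eqb j 1 then 0 else rho ^ j / 2) in *.
  assert (Heta : (j = 1%nat /\ eta = 0) \/ ((2 <= j)%nat /\ eta = rho ^ j / 2)).
  { unfold eta. destruct (Nat.eqb_spec j 1); [left|right]; split; auto; lia. }
  assert (Hrhoj : 0 < rho ^ j) by (apply pow_lt; lra).
  assert (Ha_gen : forall d, 0 <= / rho ^ (j + d) * eta <= / rho ^ d / 2).
  { intros d. assert (0 < rho ^ d) by (apply pow_lt; lra).
    assert (0 < / rho ^ d) by (apply Rinv_0_lt_compat; lra).
    rewrite pow_add. destruct Heta as [[_ ->]|[_ ->]].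
    - rewrite Rmult_0_r. lra.
    - replace (/ (rho ^ j * rho ^ d) * (rho ^ j / 2)) with (/ rho ^ d / 2) by (field; lra). lra. }
  assert (HjL : (j <= L)%nat) by lia. assert (HSjL : (S j <= L)%nat) by lia.
  set (Sm := rsum mu (S j) L).
  assert (HS0 : 0 <= Sm) by (apply rsum_nonneg; intros; apply Hmu0; lia).
  assert (Hsplit := rsum_split mu j L HjL). fold Sm in Hsplit.
  assert (Hlast := rsum_last mu j ltac:(lia)).
  assert (HnR : 729 <= INR n) by (apply le_INR in Hn; simpl in Hn; lra).
  assert (Hn9 : INR n <= INR n ^ 9) by (replace (INR n) with (INR n ^ 1) at 1 by ring; apply Rle_pow; lra || lia).
  assert (Hhead : rsum mu 1 (j - 1) <= 1 / 2).
  { destruct Heta as [[Hj1 _]|[Hj2 _]].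
    - rewrite Hj1. simpl. rewrite rsum_empty. lra.
    - apply Rle_trans with (/ INR n ^ 9); auto.
      replace (1/2) with (/2) by field. apply Rinv_le_contravar; lra. }
  assert (HmuSj : mu (S j) <= Sm).
  { unfold Sm. rewrite rsum_first by auto.
    assert (0 <= rsum mu (S (S j)) L) by (apply rsum_nonneg; intros; apply Hmu0; lia). lra. }
  assert (Hmuj : mu j <= lam * / (P * P) * (3 / 2)).
  { destruct (HD2 j ltac:(lia)) as [_ H]. rewrite pow2 in H. fold P in H.
    assert (A := Ha_gen 0%nat). rewrite Nat.add_0_r in A. simpl in A.
    assert (0 < lam * / (P * P)) by (apply Rmult_lt_0_compat; auto; apply Rinv_0_lt_compat; nra).
    nra. }
  assert (HmuSj2 : lam * / (B * P * (B * P)) * (3 / 4) <= mu (S j)).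
  { destruct (HD2 (S j) ltac:(lia)) as [H _]. rewrite pow2, HBSj in H.
    assert (A := Ha_gen 1%nat). rewrite Nat.add_1_r in A. simpl in A.
    assert (/ (rho * 1) / 2 <= 1/4).
    { rewrite Rmult_1_r. assert (/ rho <= / 2) by (apply Rinv_le_contravar; lra). lra. }
    assert (0 < lam * / (B * P * (B * P))) by (apply Rmult_lt_0_compat; auto; apply Rinv_0_lt_compat; assert (0 < B * P) by nra; nra).
    change (rho ^ S j) with (rho * rho ^ j) in H. nra. }
  assert (HSlow : 1 / (6 * B * B) <= Sm).
  { assert (E : lam * / (P * P) = B * B * (lam * / (B * P * (B * P)))) by (field; split; nra).
    rewrite E in Hmuj.
    assert (mu j <= 2 * (B * B) * Sm) by nra.
    assert (1 <= 1/2 + 2 * (B * B) * Sm + Sm) by lra.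
    assert (1 <= 6 * B * B * Sm) by nra.
    apply Rmult_le_reg_l with (6 * B * B); [nra|].
    replace (6 * B * B * (1 / (6 * B * B))) with 1 by (field; nra). lra. }
  set (W := rsum (fun l => mu l * F l) 1 L).
  assert (HWsplit := rsum_split (fun l => mu l * F l) j L HjL). fold W in HWsplit.
  assert (HW1 : 0 <= rsum (fun l => mu l * F l) 1 j)
    by (apply rsum_nonneg; intros; apply Rmult_le_pos; [apply Hmu0; lia| apply CF0; lia]).
  assert (HW2 : Sm * (19 / 20) <= rsum (fun l => mu l * F l) (S j) L).
  { unfold Sm. rewrite <- rsum_scale. apply rsum_le. intros l Hl.
    apply Rmult_le_compat_l; [apply Hmu0; lia|].
    destruct (CF1 l ltac:(lia)) as [H _].
    assert (/ B ^ (l - S j) <= 1).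
    { rewrite <- Rinv_1. apply Rinv_le_contravar; [lra|]. apply pow_R1_Rle; lra. }
    lra. }
  assert (HWlow : Sm * (19 / 20) <= W) by lra.
  assert (HWpos : 0 < W) by (assert (0 < 1 / (6 * B * B)) by (apply Rdiv_lt_0_compat; nra); lra).
  assert (Hpost : forall l, posterior L B mu theta l = mu l * F l / W).
  { intros l. rewrite post_eq.
    - rewrite Hlen. reflexivity.
    - rewrite Hlen. change (W <> 0). lra. }
  assert (HWsc : forall a b, rsum (posterior L B mu theta) a b = rsum (fun l => mu l * F l) a b * / W).
  { intros a b. rewrite <- rsum_scale. apply rsum_ext. intros l _. rewrite Hpost. unfold Rdiv. ring. }
  split.
  - split.
    + intros l Hl. rewrite Hpost. apply Rdiv_le_0_compat'; auto.
      apply Rmult_le_pos; [apply Hmu0; lia| apply CF0; lia].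
    + rewrite HWsc. fold W. field. lra.
  - unfold inD, inDeta.
    replace (Nat.eqb (S j) 1) with false by (destruct j; [lia|reflexivity]).
    split.
    + intros _. replace (S j - 1)%nat with j by lia. rewrite HWsc.
      set (e := exp (- (B / 2))).
      assert (He0 : 0 < e) by apply exp_pos.
      assert (U1 : rsum (fun l => mu l * F l) 1 j <= e).
      { apply Rle_trans with (rsum (fun l => mu l * e) 1 j).
        - apply rsum_le. intros l Hl. apply Rmult_le_compat_l; [apply Hmu0; lia| apply CF2; lia].
        - rewrite rsum_scale. assert (rsum mu 1 j <= 1) by lra. nra. }
      set (X := exp (B / 2)).
      assert (HeX : e = / X) by (unfold e, X; apply exp_Ropp).
      assert (HX1 : X = exp (B / 4) * exp (B / 4)) by (unfold X; rewrite <- exp_plus; f_equal; field).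
      assert (HX2 : (B / 4 / 3) ^ 3 <= exp (B / 4)) by (apply exp_cube; lra).
      assert (HX3 : INR n ^ 9 <= exp (B / 4)).
      { rewrite <- (exp_ln (INR n)) by lra. rewrite <- exp_nat. apply exp_le'.
        fold (lnn n). fold Ln. simpl INR. lra. }
      assert (HY : 0 < INR n ^ 9) by lra.
      assert (HX4 : (B / 4 / 3) ^ 3 * INR n ^ 9 <= X).
      { rewrite HX1. apply Rmult_le_compat; auto; try lra; apply pow_le; lra. }
      assert (HWX : INR n ^ 9 <= W * X).
      { assert (1 / (6 * B * B) * (19 / 20) * ((B / 4 / 3) ^ 3 * INR n ^ 9) <= W * X).
        { apply Rmult_le_compat; try nra.
          - apply Rmult_le_pos; [|lra]. apply Rdiv_le_0_compat'; nra.
          - apply Rmult_le_pos; [apply pow_le; lra| lra]. }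
        assert (E : 1 / (6 * B * B) * (19 / 20) * ((B / 4 / 3) ^ 3 * INR n ^ 9) = B * (19 / 207360) * INR n ^ 9)
          by (field; lra).
        rewrite E in H. nra. }
      apply Rle_trans with (e * / W).
      { apply Rmult_le_compat_r; [left; apply Rinv_0_lt_compat; lra| auto]. }
      rewrite HeX, <- Rinv_mult. apply Rinv_le_contravar; [lra|]. lra.
    + exists (lam / W). split; [apply Rdiv_lt_0_compat; auto|].
      intros l Hl. rewrite Hpost.
      set (d := (l - S j)%nat).
      assert (Hld : l = (j + S d)%nat) by (unfold d; lia).
      assert (Hrd : 0 < rho ^ d) by (apply pow_lt; lra).
      assert (HBd : rho ^ d <= B ^ d) by (apply pow_incr; lra).
      set (t := / rho ^ l * rho ^ S j).
      assert (Ht : t = / rho ^ d).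
      { unfold t. rewrite Hld, pow_add. change (rho ^ S d) with (rho * rho ^ d).
        change (rho ^ S j) with (rho * rho ^ j). field. lra. }
      assert (Ht1 : 0 <= t <= 1).
      { rewrite Ht. split; [left; apply Rinv_0_lt_compat; lra|].
        rewrite <- Rinv_1. apply Rinv_le_contravar; [lra|]. apply pow_R1_Rle; lra. }
      assert (Hal : 0 <= / rho ^ l * eta <= t / (2 * rho)).
      { rewrite Hld. destruct (Ha_gen (S d)) as [A1 A2]. split; auto.
        change (rho ^ S d) with (rho * rho ^ d) in A2. rewrite Ht.
        replace (/ rho ^ d / (2 * rho)) with (/ (rho * rho ^ d) / 2) by (field; lra). auto. }
      assert (He : 0 <= / B ^ d / 20 <= t / 20).
      { rewrite Ht. split.
        - assert (0 < / B ^ d) by (apply Rinv_0_lt_compat; apply pow_lt; lra). lra.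
        - apply Rmult_le_compat_r; [lra|]. apply Rinv_le_contravar; lra. }
      destruct (HD2 l ltac:(lia)) as [M1 M2].
      destruct (CF1 l ltac:(lia)) as [F1 F2]. fold d in F1, F2.
      assert (Hc : 0 < lam * / B ^ (2 * l)) by (apply Rmult_lt_0_compat; auto; apply Rinv_0_lt_compat; apply pow_lt; lra).
      destruct (combine_bounds (lam * / B ^ (2 * l)) (mu l) (/ rho ^ l * eta) (/ B ^ d / 20) (F l) t rho
                  Hc M1 M2 F1 F2 (proj1 Hal) (proj2 Hal) (proj1 He) (proj2 He) Ht1 ltac:(lra)) as [G1 G2].
      replace (/ rho ^ l * (rho ^ S j / 2)) with (t / 2) by (unfold t; field; apply pow_nonzero; lra).
      replace (lam / W * / B ^ (2 * l) * (1 - t / 2)) with (lam * / B ^ (2 * l) * (1 - t / 2) * / W) by (unfold Rdiv; ring).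
      replace (lam / W * / B ^ (2 * l) * (1 + t / 2)) with (lam * / B ^ (2 * l) * (1 + t / 2) * / W) by (unfold Rdiv; ring).
      unfold Rdiv at 2.
      assert (0 < / W) by (apply Rinv_0_lt_compat; lra).
      split; apply Rmult_le_compat_r; lra.
Qed.
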